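(* If $n$ is a non-negative integer, then $$\sum_{k = 1}^n \sum_{j = 0}^{k - 1} \frac{( - 1)^j }{n - j}\binom{n}{j}^3 = \begin{cases} ( - 1)^{n/2} \binom{n}{n/2}\binom{3n/2}{n}-1,&\text{if $n$ is even;} \\ 1,&\text{if $n$ is odd.} \end{cases}$$
   Context: Empty sums are zero. *)

(* Defs.v *)
From mathcomp Require Import all_boot all_order all_algebra.

(* Main.v *)
Require Import Defs.
From mathcomp Require Import all_boot all_order all_algebra.
From mathcomp Require Import ring lra zify.
Import GRing.Theory Num.Theory.
Local Open Scope ring_scope.

Definition f (m j : nat) : rat := (-1)^+j * ('C((2 * m)%N, j)%:R)^+3.
Definition P (m j : nat) : rat :=
  let M : rat := m%:R in let t : rat := j%:R * ((2 * m).+1%:R - j%:R) in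
  (M+1)^+3*(2* M+1)^+3 + t*(3/2+9* M+39/2* M^+2+18* M^+3+6* M^+4) + t^+2*(3+15/2* M+9/2* M^+2).
Definition G (m j : nat) : rat := (-1)^+j * ('C((2 * m).+1, j)%:R)^+3 * P m j / ((2 * m).+1%:R)^+3.
Definition c (m : nat) : rat := (3 * m+1)%:R * (3 * m+2)%:R * (3 * m+3)%:R.

Lemma key_lt m j : (j <= 2 * m)%N ->
  (m.+1%:R)^+3 * f m.+1 j.+1 + c m * f m j = G m j.+1 - G m j.
Proof.
move=> hj.
have e2 : (2 * m.+1 = (2 * m).+2)%N by lia.
have h1 := mul_bin_down (2 * m).+1 j.
have h2 := mul_bin_diag (2 * m).+1 j.
have h3 := mul_bin_diag (2 * m).+2 j.
rewrite /= in h1 h2 h3.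
move/(congr1 (fun k : nat => k%:R : rat)): h1. rewrite !natrM natrB; last by lia.
move=> h1.
move/(congr1 (fun k : nat => k%:R : rat)): h2. rewrite !natrM => h2.
move/(congr1 (fun k : nat => k%:R : rat)): h3. rewrite !natrM => h3.
rewrite /f /G /P /c e2.
have EA : ((2 * m).+1%:R : rat) = 2 * m%:R + 1 by rewrite -natr1 natrM.
have EB : ((2 * m).+2%:R : rat) = 2 * m%:R + 2 by rewrite -!natr1 natrM; ring.
have EC : (j.+1%:R : rat) = j%:R + 1 by rewrite -natr1.
have ED : forall k, ((3 * m + k)%:R : rat) = 3 * m%:R + k%:R by move=> k; rewrite natrD natrM.
rewrite EA EB EC in h1 h2 h3.
rewrite ?EA ?EB ?EC !ED !exprS expr0.
set B := ('C(2 * m, j))%:R : rat in h1 h2 h3 *.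
set C1 := ('C((2 * m).+1, j))%:R : rat in h1 h2 h3 *.
set C2 := ('C((2 * m).+1, j.+1))%:R : rat in h1 h2 h3 *.
set C3 := ('C((2 * m).+2, j.+1))%:R : rat in h1 h2 h3 *.
set x := (j%:R : rat) in h1 h2 h3 *.
set M := (m%:R : rat) in h1 h2 h3 *.
set s := ((-1) ^+ j : rat).
have xp : 0 <= x by rewrite /x ler0n.
have Mp : 0 <= M by rewrite /M ler0n.
have xM : x <= 2 * M by rewrite /x /M -natrM ler_nat.
have u1 : 2 * M + 1 - x != 0 by apply/eqP; lra.
have u2 : x + 1 != 0 by apply/eqP; lra.
have u3 : 2 * M + 1 != 0 by apply/eqP; lra.
have -> : C3 = ((x + 1) * C3) / (x + 1) by field.
rewrite -h3.
have -> : C1 = ((2 * M + 1 - x) * C1) / (2 * M + 1 - x) by field.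
rewrite -h1.
have -> : C2 = ((x + 1) * C2) / (x + 1) by field.
rewrite -h2.
rewrite ?exprS ?expr0.
field.
by rewrite u1 u2 u3.
Qed.

Lemma key m j : (m.+1%:R)^+3 * f m.+1 j.+1 + c m * f m j = G m j.+1 - G m j.
Proof.
case: (leqP j (2 * m)) => hj; first exact: key_lt.
have e2 : (2 * m.+1 = (2 * m).+2)%N by lia.
rewrite /f /G e2 (bin_small hj) (bin_small (_ : (2 * m).+1 < j.+1)%N) //.
have [->|hj2] := eqVneq j (2 * m).+1.
  have s2 : (-1)^+(2 * m) = 1 :> rat by rewrite exprM expr2 mulrN1 opprK expr1n.
  rewrite !binn /P /c !exprS s2 !expr0.
  have u3 : (2 * m%:R + 1 : rat) != 0.
    by rewrite -natrM natr1 pnatr_eq0.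
  rewrite -?natr1 ?natrM.
  field; done.
rewrite (bin_small (_ : (2 * m).+2 < j.+1)%N); last by lia.
rewrite (bin_small (_ : (2 * m).+1 < j)%N); last by lia.
rewrite !expr0n /= !mulr0 !mul0r; lra.
Qed.

Definition a (m : nat) : rat := \sum_(0 <= j < (2 * m).+1) f m j.

Lemma rec m : (m.+1%:R)^+3 * a m.+1 + c m * a m = 0.
Proof.
have S : \sum_(0 <= j < (2 * m).+2) ((m.+1%:R)^+3 * f m.+1 j.+1 + c m * f m j)
   = \sum_(0 <= j < (2 * m).+2) (G m j.+1 - G m j) by apply: eq_bigr => j _; exact: key.
move: S.
rewrite telescope_sumr // big_split /= -!mulr_sumr.
have e2 : (2 * m.+1 = (2 * m).+2)%N by lia.
have A1 : \sum_(0 <= j < (2 * m).+3) f m.+1 j = f m.+1 0 + \sum_(0 <= j < (2 * m).+2) f m.+1 j.+1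
  by rewrite big_nat_recl.
have A2 : \sum_(0 <= j < (2 * m).+2) f m j = \sum_(0 <= j < (2 * m).+1) f m j + f m (2 * m).+1
  by rewrite big_nat_recr.
rewrite /a e2 A1 A2.
have -> : f m (2 * m).+1 = 0 by rewrite /f bin_small // expr0n /= mulr0.
have -> : f m.+1 0 = 1 by rewrite /f bin0 expr0 expr1n mulr1.
have -> : G m (2 * m).+2 = 0 by rewrite /G bin_small // expr0n /= mulr0 !mul0r.
rewrite /G bin0 /P => h.
rewrite (_ : forall x y z w : rat, x * (1 + y) + w * z = x + (x * y + w * z)); last by move=> *; ring.
rewrite addr0 in h.
rewrite h.
have u3 : ((2 * m).+1%:R : rat) != 0 by rewrite pnatr_eq0.
rewrite !exprS !expr0.
field.
by rewrite addrC -natrM natr1 pnatr_eq0.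
Qed.

Lemma dixon m : a m = (-1)^+m * (3 * m)`!%:R / (m`!%:R)^+3.
Proof.
elim: m => [|m IH].
  rewrite /a big_nat1 /f bin0 fact0 !expr0 !expr1n !mul1r. by [].
have u : ((m.+1%:R : rat)^+3) != 0 by rewrite expf_eq0 pnatr_eq0.
have h := canRL (addrK _) (rec m).
have -> : a m.+1 = (0 - c m * a m) / (m.+1%:R)^+3.
  by rewrite -h; field; rewrite addrC natr1 pnatr_eq0.
rewrite IH /c.
have e3 : (3 * m.+1 = (3 * m).+3)%N by lia.
have uf : (m`!%:R : rat) != 0 by rewrite pnatr_eq0 -lt0n fact_gt0.
rewrite e3 !factS !natrM.
rewrite [(-1)^+m.+1]exprS.
set s := (-1) ^+ m : rat. set F := (3 * m)`!%:R : rat. set K := m`!%:R : rat.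
rewrite -!natr1 !natrD ?natrM.
have u1 : (m%:R + 1 : rat) != 0 by rewrite natr1 pnatr_eq0.
field. by apply/andP; split.
Qed.

Lemma swap (g : nat -> rat) N :
  \sum_(1 <= k < N.+1) \sum_(0 <= j < k) g j = \sum_(0 <= j < N) (N - j)%:R * g j.
Proof.
elim: N => [|N IH]; first by rewrite !big_geq.
rewrite big_nat_recr //= IH big_nat_recr //= [in RHS]big_nat_recr //= subSnn mul1r addrA.
congr (_ + _); rewrite -big_split /=.
apply: eq_big_nat => j /andP [_ hj].
by rewrite subSn ?(ltnW hj) // -natr1 mulrDl mul1r.
Qed.

Theorem proposition18 (n : nat) :
  \sum_(1 <= k < n.+1) \sum_(0 <= j < k)
     ((-1) ^+ j / (n - j)%:R * ('C(n, j) ^ 3)%:R : rat)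
  = if ~~ odd n then (-1) ^+ n./2 * ('C(n, n./2) * 'C(3 * n./2, n))%:R - 1
    else 1.
Proof.
rewrite swap.
set h := fun j => (-1) ^+ j * ('C(n, j) ^ 3)%:R : rat.
have E1 : \sum_(0 <= j < n) (n - j)%:R * ((-1) ^+ j / (n - j)%:R * ('C(n, j) ^ 3)%:R : rat)
   = \sum_(0 <= j < n) h j.
  apply: eq_big_nat => j /andP [_ hj].
  have u : ((n - j)%:R : rat) != 0 by rewrite pnatr_eq0 subn_eq0 -ltnNge.
  rewrite /h; field; exact: u.
rewrite E1.
have E2 : \sum_(0 <= j < n.+1) h j = \sum_(0 <= j < n) h j + (-1) ^+ n.
  by rewrite big_nat_recr //= /h binn exp1n mulr1.
have -> : \sum_(0 <= j < n) h j = \sum_(0 <= j < n.+1) h j - (-1) ^+ n by rewrite E2 addrK.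
case: ifP => hodd.
  have [m hm] : exists m, n = (2 * m)%N.
    exists n./2; have := odd_double_half n; rewrite (negbTE hodd) add0n -mul2n; done.
  subst n.
  have -> : (2 * m)./2 = m by rewrite mul2n doubleK.
  have -> : \sum_(0 <= j < (2 * m).+1) h j = a m.
    by apply: eq_big_nat => j _; rewrite /h /f natrX.
  rewrite dixon.
  have -> : (-1) ^+ (2 * m) = 1 :> rat by rewrite exprM expr2 mulrN1 opprK expr1n.
  congr (_ - _).
  have b1 := bin_fact (leq_addl m m).
  have b2 := bin_fact (leq_addr m (2 * m)).
  rewrite (_ : (m + m = 2 * m)%N) in b1; last by lia.
  rewrite (_ : (2 * m + m = 3 * m)%N) in b2; last by lia.
  rewrite (_ : (2 * m - m = m)%N) in b1; last by lia.
  rewrite (_ : (3 * m - 2 * m = m)%N) in b2; last by lia.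
  rewrite -b2 -b1 !natrM.
  have uf : (m`!%:R : rat) != 0 by rewrite pnatr_eq0 -lt0n fact_gt0.
  field.
  by rewrite uf.
have -> : \sum_(0 <= j < n.+1) h j = 0.
  set D := \sum_(0 <= j < n.+1) h j.
  have : D = - D.
    rewrite {1}/D big_nat_rev /= /D -sumrN.
    apply: eq_big_nat => j /andP [_ hj].
    rewrite add0n subSS /h bin_sub; last by lia.
    have e : (-1) ^+ (n - j) * (-1) ^+ j = (-1) ^+ n :> rat by rewrite -exprD subnK //; lia.
    have e2 : (-1) ^+ n = -1 :> rat by rewrite -signr_odd (negbFE hodd) expr1.
    have e3 : (-1) ^+ j * (-1) ^+ j = 1 :> rat by rewrite -expr2 -exprM mulnC exprM expr2 mulrN1 opprK expr1n.
    have -> : (-1) ^+ (n - j) = - (-1) ^+ j :> rat.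
      have q : (-1) ^+ (n - j) = (-1) ^+ (n - j) * ((-1) ^+ j * (-1) ^+ j) :> rat by rewrite e3 mulr1.
      by rewrite q mulrA e e2 mulN1r.
    by rewrite mulNr.
  move=> hD; lra.
rewrite -signr_odd (negbFE hodd) expr1; lra.
Qed.
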